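(* Let $k\ge 2$ and let $I$ be a purified instance relative to $C_k$ such that the instance graph $F_{C_k}(I)$ is strongly connected. If $F_{C_k}(I)$ contains a directed simple cycle of length greater than $k$, then $\mathcal M_{C_k}(I)=\{\emptyset\}$ (in particular $I\not\vDash C_k$). Otherwise $\mathcal M_{C_k}(I)=\{\{(a_1,\dots,a_k)\}: (a_1,\dots,a_k)\in C_k^f(I)\}$, i.e. every frugal repair yields exactly one answer tuple (one $k$-cycle $a_1\to a_2\to\dots\to a_k\to a_1$ of $F_{C_k}(I)$), and every such $k$-cycle is the unique answer of some frugal repair.
   Context: For $k\ge2$, $C_k=R_1(\underline{x_1},x_2),\dots,R_k(\underline{x_k},x_1)$ with the first attribute of each atom the key; relations may be of consistent or inconsistent type. A repair of $I$ is a maximal subset of $I$ satisfying all key constraints (one tuple per key-group); $I\vDash C_k$ means $C_k(r)$ holds for every repair. $C_k^f(r)$ is the set of tuples $(a_1,\dots,a_k)$ with $R_i(a_i,a_{i+1})\in r$ for all $i$ (indices mod $k$). A repair $r$ is frugal if no repair $r'$ has $C_k^f(r')\subsetneq C_k^f(r)$, and $\mathcal M_{C_k}(I)=\{C_k^f(r): r$ frugal$\}$. $I$ is purified relative to $C_k$ if every tuple of each $R_i^I$ occurs in some tuple of $C_k^f(I)$. The instance graph $F_{C_k}(I)$ has the constants of $I$ as vertices and an edge $(a,b)$ for each tuple $R_i(a,b)\in I$; constants in positions of distinct variables are assumed distinct. *)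

(* Defs.v *)
From mathcomp Require Import all_boot.
Set Implicit Arguments. Unset Strict Implicit. Unset Printing Implicit Defensive.

(* Query C_k = R_0(x_0,x_1), ..., R_{k-1}(x_{k-1},x_0) (0-based, indices mod k).
   A fact R_i(a,b) is encoded as (i, a, b) : 'I_k * T * T.  The standing
   assumption that constants in positions of distinct variables are distinct
   is realised by tagging constants with their variable index: the constant a
   at position x_i is the vertex (i, a). *)
Definition fact (k : nat) (T : finType) := ('I_k * T * T)%type.

Definition frel k T (f : fact k T) : 'I_k := f.1.1.
Definition fkey k T (f : fact k T) : T := f.1.2.

Definition consistent k T (s : {set fact k T}) : Prop :=
  forall f g, f \in s -> g \in s -> frel f = frel g -> fkey f = fkey g -> f = g.

Definition repair k T (I r : {set fact k T}) : Prop :=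
  [/\ r \subset I, consistent r &
      forall r' : {set fact k T}, r \subset r' -> r' \subset I -> consistent r' -> r' = r].

Definition Cf k T (r : {set fact k T}) : {set {ffun 'I_k -> T}} :=
  [set t : {ffun 'I_k -> T} | [forall i : 'I_k, (i, t i, t (ordS i)) \in r]].

Definition query_true k T (r : {set fact k T}) : Prop := Cf r != set0.

Definition certain k T (I : {set fact k T}) : Prop :=
  forall r, repair I r -> query_true r.

Definition frugal k T (I r : {set fact k T}) : Prop :=
  repair I r /\ ~ (exists r' : {set fact k T}, repair I r' /\ Cf r' \proper Cf r).

Definition inM k T (I : {set fact k T}) (X : {set {ffun 'I_k -> T}}) : Prop :=
  exists r, frugal I r /\ X = Cf r.

Definition purified k T (I : {set fact k T}) : Prop :=
  forall f, f \in I -> exists2 t, t \in Cf I &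
    t (frel f) = fkey f /\ t (ordS (frel f)) = f.2.

Definition vertex k T (I : {set fact k T}) (u : 'I_k * T) : Prop :=
  exists f, f \in I /\ (u = (f.1.1, f.1.2) \/ u = (ordS f.1.1, f.2)).

Definition edge k T (I : {set fact k T}) : rel ('I_k * T) :=
  fun u v => (v.1 == ordS u.1) && ((u.1, u.2, v.2) \in I).

Definition strongly_connected k T (I : {set fact k T}) : Prop :=
  forall u v, vertex I u -> vertex I v -> connect (edge I) u v.

Definition has_long_cycle k T (I : {set fact k T}) : Prop :=
  exists p : seq ('I_k * T), [/\ uniq p, cycle (edge I) p & k < size p].

(* Main.v *)
Require Import Defs.
From mathcomp Require Import all_boot.
Set Implicit Arguments. Unset Strict Implicit. Unset Printing Implicit Defensive.

Section Aux.
Variables (k : nat) (T : finType).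
Local Notation V := ('I_k * T)%type.
Local Notation F := (fact k T).

Definition keys (S : {set F}) : {set V} := [set f.1 | f in S].
Definition tgt (f : F) : V := (ordS f.1.1, f.2).

Lemma consE (r : {set F}) :
  consistent r <-> forall f g, f \in r -> g \in r -> f.1 = g.1 -> f = g.
Proof.
split=> H f g fr gr.
- by move=> e; apply: H => //; rewrite /Defs.frel /fkey e.
- by move=> e1 e2; apply: H => //; move: e1 e2 {fr gr};
    case: f => [[? ?] ?]; case: g => [[? ?] ?]; rewrite /Defs.frel /fkey /= => -> ->.
Qed.

Lemma edgeE (I : {set F}) u v :
  edge I u v -> (u, v.2) \in I /\ v = tgt (u, v.2).
Proof.
case: u v => [a b] [c d]; rewrite /edge /tgt /= => /andP[/eqP -> ->]; by [].
Qed.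

Lemma edge_tgt (I : {set F}) g : g \in I -> edge I g.1 (tgt g).
Proof. by case: g => [[a b] c] gI; rewrite /edge /tgt /= eqxx gI. Qed.

Lemma repairP (I r : {set F}) :
  r \subset I -> consistent r ->
  (forall f, f \in I -> exists2 g, g \in r & g.1 = f.1) -> repair I r.
Proof.
move=> sub /consE cons cov; split => //; first by apply/consE.
move=> r' srr' sr'I /consE cons'; apply/setP => f; apply/idP/idP; last first.
  by move/(subsetP srr').
move=> fr'; have [g gr e] := cov f (subsetP sr'I f fr').
by rewrite (cons' f g) // (subsetP srr').
Qed.

Lemma repair_cov (I r : {set F}) :
  repair I r -> forall f, f \in I -> exists2 g, g \in r & g.1 = f.1.
Proof.
case=> sub cons max f fI.
have [/existsP[g /andP[gr /eqP e]]|no] := boolP [exists g in r, g.1 == f.1].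
  by exists g.
suff: f |: r = r by move=> e; exists f => //; rewrite -e setU11.
apply: max; first exact: subsetUr.
  by rewrite subUset sub1set fI sub.
apply/consE => g h; rewrite !inE => /orP[/eqP->|gr] /orP[/eqP->|hr] //.
- move=> e; case/negP: no; apply/existsP; exists h; by rewrite hr e eqxx.
- move=> e; case/negP: no; apply/existsP; exists g; by rewrite gr e eqxx.
- by move/consE: cons; apply.
Qed.

Lemma extend (I S : {set F}) :
  S \subset I -> consistent S ->
  (forall f, f \in I -> exists2 c, c \in keys S & connect (edge I) f.1 c) ->
  exists r, [/\ repair I r, S \subset r &
     forall f, f \in I -> exists2 c, c \in keys S & connect (edge r) f.1 c].
Proof.
have [n] := ubnP #|keys I :\: keys S|; elim: n S => // n IH S lt sSI cons hyp.
case: (boolP (keys I \subset keys S)) => [ksub|].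
  exists S; split => //.
    apply: repairP => // f fI.
    have: f.1 \in keys S by apply: (subsetP ksub); apply: imset_f.
    by case/imsetP => g gS e; exists g.
  move=> f fI; exists f.1; last exact: connect0.
  by apply: (subsetP ksub); exact: imset_f.
case/subsetPn => u /imsetP[f fI ->] fnot.
have [g [gI gnot gtgt]] :
    exists g, [/\ g \in I, g.1 \notin keys S & tgt g \in keys S].
  have [c cS /connectP[p pth ec]] := hyp f fI.
  elim: p (f.1) fnot pth ec => [|y p IHp] x xn /=.
    by move=> _ ec; rewrite -ec cS in xn.
  case/andP => exy pth ec.
  case: (boolP (y \in keys S)) => yS; last exact: IHp yS pth ec.
  have [xyI ey] := edgeE exy.
  by exists (x, y.2); split => //; rewrite -ey.
set S' := g |: S.
have cons' : consistent S'.
  apply/consE => a b; rewrite !inE => /orP[/eqP->|aS] /orP[/eqP->|bS] // e.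
  - by case/negP: gnot; rewrite e; exact: imset_f.
  - by case/negP: gnot; rewrite -e; exact: imset_f.
  - by move/consE: cons; apply.
have keysS' : keys S' = g.1 |: keys S by rewrite /keys imsetU1.
have [r [rep sr reach]] : exists r, [/\ repair I r, S' \subset r &
     forall f, f \in I -> exists2 c, c \in keys S' & connect (edge r) f.1 c].
  apply: IH => //.
  - rewrite -ltnS; apply: leq_trans lt; rewrite ltnS; apply: proper_card; apply/properP; split.
      apply/subsetP => x; rewrite !inE keysS' !inE.
      by case/andP => /norP[_ ->] ->.
    exists g.1; last by rewrite keysS' !inE eqxx.
    by rewrite !inE gnot; apply: imset_f.
  - by rewrite subUset sub1set gI sSI.
  - move=> h hI; have [c cS con] := hyp h hI; exists c => //.
    by rewrite keysS' !inE cS orbT.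
exists r; split => //; first exact: subset_trans (subsetUr _ _) sr.
move=> h hI; have [c cS' con] := reach h hI.
rewrite keysS' in cS'; case/setU1P: cS' => [ec|cS]; last by exists c.
exists (tgt g) => //; apply: connect_trans con _; rewrite ec.
by apply: connect1; apply: edge_tgt; apply: (subsetP sr); exact: setU11.
Qed.

Lemma cf_meets (I r : {set F}) (K : {set V}) (i0 : 'I_k) t :
  consistent r -> r \subset I ->
  (forall f, f \in I -> exists2 c, c \in K & connect (edge r) f.1 c) ->
  t \in Cf r -> exists i, (i, t i) \in K.
Proof.
move=> /consE cons sub reach; rewrite inE => /forallP tr.
have [c cK con] := reach _ (subsetP sub _ (tr i0)).
suff [j cj] : exists j, c = (j, t j) by exists j; rewrite -cj.
case/connectP: con => p pth ->{c cK}.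
elim: p i0 pth => [|y p IHp] i /=; first by exists i.
case/andP => e pth; have [yr ey] := edgeE e.
have yE : y = (ordS i, t (ordS i)).
  have := cons _ _ yr (tr i) erefl; case => e2.
  by rewrite ey /tgt /= e2.
by move: (IHp (ordS i)) => /=; rewrite -yE; apply.
Qed.

Lemma iter_ordS n (i : 'I_k) : val (iter n (@ordS k) i) = (i + n) %% k.
Proof.
elim: n => [|n IHn] /=; first by rewrite addn0 modn_small.
by rewrite -addn1 -modnDml IHn modn_mod modnDml addn1 addnS.
Qed.

Lemma ordS_ind (P : 'I_k -> Prop) i0 :
  P i0 -> (forall j, P j -> P (ordS j)) -> forall j, P j.
Proof.
move=> P0 PS j.
have -> : j = iter (j + k - i0) (@ordS k) i0.
  apply: val_inj; rewrite iter_ordS /= addnBA; last first.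
    by apply: leq_trans (ltnW (ltn_ord i0)) (leq_addl _ _).
  by rewrite addnC addnK modnDr modn_small.
by elim: (_ - _) => //= n IHn; apply: PS.
Qed.

Lemma vertex_key (I : {set F}) f : f \in I -> vertex I f.1.
Proof. by move=> fI; exists f; split => //; left; case: f {fI} => [[? ?] ?]. Qed.

Lemma keys_sub (I S : {set F}) c : S \subset I -> c \in keys S -> vertex I c.
Proof. by move=> sub /imsetP[f fS ->]; apply: vertex_key; apply: (subsetP sub). Qed.

Lemma extend_sc (I S : {set F}) c0 :
  strongly_connected I -> S \subset I -> consistent S -> c0 \in keys S ->
  exists r, [/\ repair I r, S \subset r &
     forall f, f \in I -> exists2 c, c \in keys S & connect (edge r) f.1 c].
Proof.
move=> sc sub cons c0S; apply: extend => // f fI; exists c0 => //.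
by apply: sc; [apply: vertex_key | apply: keys_sub c0S].
Qed.

Lemma tuple_repair (I : {set F}) (i0 : 'I_k) t :
  strongly_connected I -> t \in Cf I ->
  exists r, [/\ repair I r, t \in Cf r & forall t', t' \in Cf r -> t' = t].
Proof.
move=> sc tI; move: (tI); rewrite inE => /forallP tI'.
pose St := [set (i, t i, t (ordS i)) | i : 'I_k].
have sub : St \subset I by apply/subsetP => f /imsetP[i _ ->].
have cons : consistent St.
  by apply/consE => a b /imsetP[i _ ->] /imsetP[j _ ->] [->].
have c0S : (i0, t i0) \in keys St.
  by apply/imsetP; exists (i0, t i0, t (ordS i0)) => //; apply: imset_f.
have [r [rep sr reach]] := extend_sc sc sub cons c0S.
have rc : consistent r by case: rep.
have rI : r \subset I by case: rep.
have tr : t \in Cf r.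
  by rewrite inE; apply/forallP => i; apply: (subsetP sr); apply: imset_f.
exists r; split => // t' t'r.
have [i] := cf_meets i0 rc rI reach t'r.
case/imsetP => a /imsetP[j _ ->] [ij tij].
move: t'r; rewrite inE => /forallP t'r.
have Sr i' : (i', t i', t (ordS i')) \in r by apply: (subsetP sr); apply: imset_f.
apply/ffunP; apply: (@ordS_ind (fun j => t' j = t j) i).
  by rewrite tij ij.
move=> j' e; move/consE: rc => rc.
have := rc _ _ (t'r j') (Sr j'); rewrite e => /(_ erefl); by case.
Qed.

Lemma long_repair (I : {set F}) p :
  strongly_connected I -> uniq p -> cycle (edge I) p -> k < size p ->
  exists r, repair I r /\ Cf r = set0.
Proof.
move=> sc up cyc szp.
have [x0 x0p] : exists x0, x0 \in p.
  by case: p szp {up cyc} => [|x q] //= _; exists x; rewrite inE eqxx.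
pose Sp := [set ((u, (next p u).2) : F) | u in p].
have sub : Sp \subset I.
  apply/subsetP => f /imsetP[u up' ->].
  by have [] := edgeE (next_cycle cyc up').
have cons : consistent Sp.
  by apply/consE => a b /imsetP[u _ ->] /imsetP[v _ ->] /= ->.
have keysp x : x \in keys Sp -> x \in p.
  by case/imsetP => f /imsetP[u up' ->] ->.
have c0S : x0 \in keys Sp.
  by apply/imsetP; exists (x0, (next p x0).2) => //; apply: imset_f.
have [r [rep sr reach]] := extend_sc sc sub cons c0S.
have rc : consistent r by case: rep.
have rI : r \subset I by case: rep.
exists r; split => //; apply/setP => t; rewrite in_set0.
apply/negbTE/negP => tr.
have [i /keysp ip] := cf_meets x0.1 rc rI reach tr.
move: tr; rewrite inE => /forallP tr.
have nxt j : (j, t j) \in p -> next p (j, t j) = (ordS j, t (ordS j)).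
  move=> jp.
  have [_ ew] := edgeE (next_cycle cyc jp).
  have wr : ((j, t j), (next p (j, t j)).2) \in r by apply: (subsetP sr); apply: imset_f.
  move/consE: rc => rc.
  have := rc _ _ wr (tr j) erefl; case => e2.
  by rewrite ew /tgt /= e2.
have allp y : y \in p -> exists j, y = (j, t j).
  move=> yp; have := connect_cycle (cycle_next up) ip yp.
  case/connectP => q pth ->{yp}.
  elim: q i ip pth => [|z q IHq] j jp /=; first by exists j.
  case/andP => /eqP ez pth.
  have zE : z = (ordS j, t (ordS j)) by rewrite -ez nxt.
  have zp : z \in p by rewrite -ez mem_next.
  rewrite zE in pth zp *; exact: IHq _ zp pth.

have : size p <= size [seq (j, t j) | j <- enum 'I_k].
  apply: uniq_leq_size => // y /allp [j ->].
  by apply/mapP; exists j; rewrite ?mem_enum.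
by rewrite size_map size_enum_ord leqNgt szp.
Qed.

Lemma repair_nonempty (I r : {set F}) :
  purified I -> I != set0 -> repair I r -> ~ has_long_cycle I ->
  exists t, t \in Cf r.
Proof.
move=> pur nI0 rep nolong.
have rI : r \subset I by case: rep.
have rc : consistent r by case: rep.
pose succ (u : V) : V := if [pick g in r | g.1 == u] is Some g then tgt g else u.
have succP u : u \in keys I ->
    [/\ (u, (succ u).2) \in r, succ u = tgt (u, (succ u).2) & succ u \in keys I].
  case/imsetP => f fI ->{u}.
  have [g gr ge] := repair_cov rep fI.
  rewrite /succ; case: pickP => [g' /andP[g'r /eqP e]|none]; last first.
    by move: (none g); rewrite gr ge eqxx.
  have g'E : g' = (f.1, g'.2).
    by apply: (etrans (surjective_pairing _)); congr (_, _); exact: e.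
  rewrite /tgt /= -g'E; split => //; first by rewrite -e.
  have [t tI [t1 t2]] := pur g' (subsetP rI _ g'r).
  move: tI; rewrite inE => /forallP /(_ (ordS g'.1.1)) tI.
  apply/imsetP; exists (ordS g'.1.1, t (ordS g'.1.1), t (ordS (ordS g'.1.1))) => //=.
  by rewrite -t2.
have layer u : u \in keys I -> (succ u).1 = ordS u.1.
  by case/succP => _ -> _.
have [u0 u0I] : exists u0, u0 \in keys I.
  by case/set0Pn: nI0 => f fI; exists f.1; apply: imset_f.
have iterK n u : u \in keys I -> iter n succ u \in keys I.
  by move=> uI; elim: n => //= n IHn; case/succP: IHn.
have [y [yI [Q [Q0 QE]]]] : exists y, [/\ y \in keys I &
     exists Q, 0 < Q /\ iter Q succ y = y].
  pose s := traject succ u0 #|{: V}|.+1.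
  have : ~~ uniq s.
    apply/negP => /card_uniqP us.
    by have := max_card (mem s); rewrite us size_traject ltnn.
  case/(uniqPn u0) => i [j [ij js]].
  rewrite size_traject in js.
  rewrite !nth_traject ?(ltn_trans ij) // => eij.
  exists (iter i succ u0); split; first exact: iterK.
  exists (j - i); split; first by rewrite subn_gt0.
  by rewrite -iterD subnK ?(ltnW ij).
have exP : exists n, (0 < n) && (iter n succ y == y).
  by exists Q; rewrite Q0 QE eqxx.
case: (ex_minnP exP) => P /andP[P0 /eqP PE] Pmin.
have iterKy n : iter n succ y \in keys I := iterK n y yI.
have [P' PP'] : exists P', P = P'.+1 by exists P.-1; rewrite prednK.
have uq : uniq (traject succ y P).
  rewrite PP' looping_uniq; apply/negP => /trajectP [m lt em].
  have : P <= m.+1.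
    by apply: Pmin; apply/andP; split => //; apply/eqP; rewrite iterS -em -iterS -PP' PE.
  by rewrite PP' ltnS leqNgt lt.
have cyc : cycle (edge I) (traject succ y P).
  apply: (sub_in_cycle (P := mem (keys I)) (e := frel succ)).
  - move=> a b aI _ /eqP <-; case/succP: aI => ar -> _.
    exact: edge_tgt (subsetP rI _ ar).
  - by apply/allP => z /trajectP[m _ ->]; exact: iterKy.
  - rewrite PP' trajectS /=.
    have -> : rcons (traject succ (succ y) P') y = traject succ (succ y) P'.+1.
      by rewrite trajectSr -iterSr -PP' PE.
    exact: fpath_traject.
have Pk : P <= k.
  rewrite leqNgt; apply/negP => kP; apply: nolong.
  by exists (traject succ y P); rewrite size_traject.
have lay n : (iter n succ y).1 = iter n (@ordS k) y.1.
  by elim: n => //= n IHn; rewrite layer ?iterKy // IHn.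
have Pk' : P = k.
  have := congr1 (fun u : V => val u.1) PE; rewrite /= lay iter_ordS => e.
  have : (y.1 + P == y.1 + 0 %[mod k]) by rewrite addn0 e modn_small.
  rewrite eqn_modDl mod0n => /eqP Pm.
  apply/eqP; rewrite eqn_leq Pk /= leqNgt; apply/negP => lt.
  by rewrite modn_small // in Pm; rewrite Pm in P0.
rewrite Pk' in PE.
have per n : iter n succ y = iter (n %% k) succ y.
  rewrite {1}(divn_eq n k) addnC iterD.
  suff -> : iter (n %/ k * k) succ y = y by [].
  by elim: (n %/ k) => // q IHq; rewrite mulSn iterD IHq PE.
have sameL a b : (iter a succ y).1 = (iter b succ y).1 ->
    iter a succ y = iter b succ y.
  move=> e; rewrite per (per b); congr (iter _ _ _).
  move/(congr1 val): e; rewrite !lay !iter_ordS => /eqP.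
  by rewrite eqn_modDl => /eqP.
pose d (l : 'I_k) := l + k - y.1.
have layd l : (iter (d l) succ y).1 = l.
  apply: val_inj; rewrite lay iter_ordS /d addnBA; last first.
    by apply: leq_trans (ltnW (ltn_ord _)) (leq_addl _ _).
  by rewrite addnC addnK modnDr modn_small.
pose t := [ffun l => (iter (d l) succ y).2].
exists t; rewrite inE; apply/forallP => l.
have zE : iter (d l) succ y = (l, t l).
  by rewrite ffunE [LHS]surjective_pairing layd.
have [zr _ _] := succP _ (iterKy (d l)).
have e2 : succ (iter (d l) succ y) = iter (d (ordS l)) succ y.
  by rewrite -iterS; apply: sameL; rewrite iterS layer ?iterKy // !layd.

rewrite e2 zE in zr.
have -> : t (ordS l) = (iter (d (ordS l)) succ y).2 by rewrite ffunE.
exact: zr.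
Qed.
End Aux.

Lemma Cf_mono k T (r I : {set fact k T}) : r \subset I -> {subset Cf r <= Cf I}.
Proof.
move=> sub t; rewrite !inE => /forallP tr; apply/forallP => i.
exact: (subsetP sub).
Qed.

Theorem lemma4p3 (k : nat) (T : finType) (I : {set fact k T}) :
  2 <= k -> I != set0 -> purified I -> strongly_connected I ->
  (has_long_cycle I ->
     (forall X, inM I X <-> X = set0) /\ ~ certain I) /\
  (~ has_long_cycle I ->
     forall X, inM I X <-> exists2 t, t \in Cf I & X = [set t]).
Proof.
move=> k2 nI0 pur sc.
have i0 : 'I_k := Ordinal (ltnW k2).
split.
  case=> p [up cyc szp].
  have [r0 [rep0 cf0]] := long_repair sc up cyc szp.
  have fr0 : frugal I r0.
    split => //; case=> r' [_ /properP[_ [t]]]; by rewrite cf0 in_set0.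
  split.
    move=> X; split; last by move=> ->; exists r0.
    case=> r [[rep nfr] ->].
    case: (eqVneq (Cf r) set0) => // ne; exfalso; apply: nfr.
    exists r0; split => //; rewrite cf0; apply/properP; split; first exact: sub0set.
    by case/set0Pn: ne => t tr; exists t; rewrite ?in_set0.
  by move=> cert; have := cert r0 rep0; rewrite /query_true cf0 eqxx.
move=> nolong X; split.
  case=> r [[rep nfr] ->].
  have [t tr] := repair_nonempty pur nI0 rep nolong.
  have rI : r \subset I by case: rep.
  have tI : t \in Cf I by apply: Cf_mono tr.
  have [r' [rep' tr' uni]] := tuple_repair i0 sc tI.
  have Cr' : Cf r' = [set t].
    by apply/setP => u; rewrite inE; apply/idP/eqP => [/uni //| ->].
  exists t => //; case: (eqVneq (Cf r) [set t]) => // ne; exfalso; apply: nfr.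
  by exists r'; split => //; rewrite Cr' properEneq eq_sym ne sub1set tr.
case=> t tI ->.
have [r' [rep' tr' uni]] := tuple_repair i0 sc tI.
have Cr' : Cf r' = [set t].
  by apply/setP => u; rewrite inE; apply/idP/eqP => [/uni //| ->].
exists r'; split => //; split => //; case=> r'' [rep'' pr].
have [u ur] := repair_nonempty pur nI0 rep'' nolong.
move: pr; rewrite Cr' => /properP[sub [x xin xnot]].
have := subsetP sub _ ur; rewrite inE => /eqP ut.
by move: xin xnot; rewrite inE => /eqP ->; rewrite -ut ur.
Qed.
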